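(* Let $K\le L$ be positive integers with $2^K>N$, and consider a nonempty configuration. If $A(G)\ge 2^K$, then the expected number of times a full execution of the inter-level sampler enters the refinement loop is at most $N/(2^K-N)$. If $A(G)\ge 2^L$, this bound improves to $N/(2^L-N)$.
   Context: Fix an integer $b\ge 2$. There is a set $\mathcal L$ of $N$ levels, which are consecutive integers. Each level $\ell$ holds a finite (possibly empty) multiset of normalized significands, each an integer in $[2^{b-1},2^b)$. Let $z$ be the total number of stored significands over all levels; assume $z<2^b$. For each level, $SS_\ell$ is the sum of its significands (so $SS_\ell=0$ iff the level is empty); set $SS_\ell=0$ for integers $\ell\notin\mathcal L$. The level weight is $W_\ell=SS_\ell2^\ell$. For an integer global shift $G$, $A_\ell(G)=\lfloor W_\ell2^G\rfloor+1$ if $SS_\ell>0$ and $A_\ell(G)=0$ if $SS_\ell=0$; $A(G)=\sum_\ell A_\ell(G)$ and $M(G)=\sum_\ell W_\ell2^G$. The configuration is nonempty if $z\ge1$. Inter-level sampler (Algorithm 1), with shift $G$ and $A=A(G)$: it performs independent outer iterations. In an outer iteration, draw $x$ uniformly from $\{1,\dots,A\}$ and scan the levels in decreasing order starting from the largest nonempty level. At the current level $\ell$: if $x<A_\ell(G)$, return $\ell$; if $x=A_\ell(G)$, run the refinement loop for $m=1,2,\dots$: draw $r$ uniformly from $\{0,\dots,2^b-1\}$ independently, let $t=\lfloor SS_\ell 2^{\ell+G+mb}\rfloor \bmod 2^b$; if $r<t$ return $\ell$; else if $r>t$ or $\ell+G+mb\ge 0$, abandon this outer iteration and start a new one; otherwise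 continue with $m+1$. If $x>A_\ell(G)$, set $x\leftarrow x-A_\ell(G)$ and move to the next lower level. *)

(* Defs.v *)
From Stdlib Require Import Reals ZArith List Lia Lra.
From Coquelicot Require Import Coquelicot.
Import ListNotations.
Open Scope R_scope.

(* A configuration: base b, lowest level lo, N levels lo, lo+1, ..., lo+N-1;
   level with index i (i < N) is the integer level  lo + i  and holds the
   multiset (list) of significands  sig i. *)

Definition rsum (l : list R) : R := fold_right Rplus 0 l.

Definition SS (sig : nat -> list nat) (i : nat) : nat := fold_right Nat.add 0%nat (sig i).

Definition zcount (N : nat) (sig : nat -> list nat) : nat :=
  fold_right Nat.add 0%nat (map (fun i => length (sig i)) (seq 0 N)).

Definition level (lo : Z) (i : nat) : Z := (lo + Z.of_nat i)%Z.

Definition Wl (lo : Z) (sig : nat -> list nat) (i : nat) : R :=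
  INR (SS sig i) * powerRZ 2 (level lo i).

Definition Al (lo : Z) (sig : nat -> list nat) (G : Z) (i : nat) : Z :=
  if Nat.eqb (SS sig i) 0 then 0%Z
  else (Int_part (Wl lo sig i * powerRZ 2 G) + 1)%Z.

Definition Atot (lo : Z) (N : nat) (sig : nat -> list nat) (G : Z) : Z :=
  fold_right Z.add 0%Z (map (Al lo sig G) (seq 0 N)).

Definition tval (b : nat) (lo : Z) (sig : nat -> list nat) (G : Z) (i m : nat) : Z :=
  Z.modulo (Int_part (INR (SS sig i) *
              powerRZ 2 (level lo i + G + Z.of_nat m * Z.of_nat b)))
           (2 ^ Z.of_nat b).

(* Probability that the refinement loop at level index i, started at round m,
   returns the level (rather than abandoning the outer iteration).
   In round m, with r uniform in {0..2^b-1}: return iff r < t (prob t/2^b);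
   continue to round m+1 iff r = t (prob 1/2^b) and l+G+mb < 0;
   abandon otherwise.  [fuel] bounds the number of rounds; see refine_prob. *)
Fixpoint refine_succ (b : nat) (lo : Z) (sig : nat -> list nat) (G : Z)
    (i : nat) (fuel m : nat) : R :=
  match fuel with
  | O => 0
  | S f =>
      IZR (tval b lo sig G i m) / 2 ^ b
      + (if Z.ltb (level lo i + G + Z.of_nat m * Z.of_nat b) 0
         then / 2 ^ b * refine_succ b lo sig G i f (S m)
         else 0)
  end.

(* The loop starts at m = 1 and surely stops by round m = -(l+G)+1
   (since b >= 1, at that round l+G+mb >= 0), so this fuel is exact. *)
Definition refine_prob (b : nat) (lo : Z) (sig : nat -> list nat) (G : Z)
    (i : nat) : R :=
  refine_succ b lo sig G i (Z.to_nat (- (level lo i + G)) + 1) 1.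

Inductive scan_out := SRet (i : nat) | SRefine (i : nat) | SFall.

Fixpoint scan (lo : Z) (sig : nat -> list nat) (G : Z) (x : Z) (l : list nat)
    : scan_out :=
  match l with
  | [] => SFall
  | i :: l' =>
      let a := Al lo sig G i in
      if Z.ltb x a then SRet i
      else if Z.eqb x a then SRefine i
      else scan lo sig G (x - a) l'
  end.

(* Levels in decreasing order: indices N-1, ..., 0 (empty levels have A_l=0
   and are passed over without changing x, so starting at the top level is
   the same as starting at the largest nonempty level). *)
Definition levels_desc (N : nat) : list nat := rev (seq 0 N).

Definition draws (A : Z) : list Z := map (fun k => Z.of_nat k + 1)%Z (seq 0 (Z.to_nat A)).

Definition scan_x (lo : Z) (N : nat) (sig : nat -> list nat) (G : Z) (x : Z) :=
  scan lo sig G x (levels_desc N).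

Definition P_ret (b : nat) (lo : Z) (N : nat) (sig : nat -> list nat) (G : Z) : R :=
  rsum (map (fun x => match scan_x lo N sig G x with
                      | SRet _ => 1
                      | SRefine i => refine_prob b lo sig G i
                      | SFall => 0
                      end) (draws (Atot lo N sig G)))
  / IZR (Atot lo N sig G).

Definition P_enter (lo : Z) (N : nat) (sig : nat -> list nat) (G : Z) : R :=
  rsum (map (fun x => match scan_x lo N sig G x with
                      | SRefine _ => 1
                      | _ => 0
                      end) (draws (Atot lo N sig G)))
  / IZR (Atot lo N sig G).

(* Term k of the expected number of refinement-loop entries of a full run:
   P(outer iteration k+1 is executed, i.e. the first k iterations were all
   abandoned) * P(that iteration enters the refinement loop); iterations are
   independent.  The expectation is the sum over k >= 0 (linearity). *)
Definition refine_entries_term (b : nat) (lo : Z) (N : nat) (sig : nat -> list nat)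
    (G : Z) (k : nat) : R :=
  (1 - P_ret b lo N sig G) ^ k * P_enter lo N sig G.

Definition expected_refine_entries (b : nat) (lo : Z) (N : nat)
    (sig : nat -> list nat) (G : Z) : R :=
  Series (refine_entries_term b lo N sig G).

(* Main.v *)
Require Import Defs.
From Stdlib Require Import Reals ZArith List Lia Lra.
From Coquelicot Require Import Coquelicot.
Import ListNotations.
Open Scope R_scope.

Lemma pow2_IZR (n : nat) : IZR (2 ^ Z.of_nat n) = 2 ^ n.
Proof. rewrite <- pow_IZR. reflexivity. Qed.

Lemma pow2_pos (n : nat) : 1 <= 2 ^ n.
Proof. induction n; simpl; lra. Qed.

Lemma refine_succ_bounds b lo sig G i fuel m :
  0 <= refine_succ b lo sig G i fuel m <= 1.
Proof.
  revert m; induction fuel as [|f IH]; intro m; simpl; [lra|].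
  assert (Ht : (0 <= tval b lo sig G i m < 2 ^ Z.of_nat b)%Z).
  { unfold tval. apply Z.mod_pos_bound. apply Z.pow_pos_nonneg; lia. }
  assert (Hb := pow2_pos b).
  assert (H1 : 0 <= IZR (tval b lo sig G i m)) by (apply IZR_le; lia).
  assert (H2 : IZR (tval b lo sig G i m) + 1 <= 2 ^ b).
  { rewrite <- pow2_IZR, <- plus_IZR. apply IZR_le; lia. }
  destruct (IH (S m)) as [I1 I2].
  assert (0 <= IZR (tval b lo sig G i m) / 2 ^ b).
  { apply Rdiv_le_0_compat; lra. }
  assert (IZR (tval b lo sig G i m) / 2 ^ b + / 2 ^ b <= 1).
  { unfold Rdiv. rewrite <- (Rmult_1_l (/ 2 ^ b)) at 2. rewrite <- Rmult_plus_distr_r.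
    apply Rmult_le_reg_r with (2 ^ b); [lra|]. rewrite Rmult_assoc, Rinv_l; lra. }
  assert (0 < / 2 ^ b) by (apply Rinv_0_lt_compat; lra).
  destruct (Z.ltb _ _); split; try nra.
Qed.

Lemma refine_prob_bounds b lo sig G i : 0 <= refine_prob b lo sig G i <= 1.
Proof. apply refine_succ_bounds. Qed.

Lemma Int_part_nonneg x : 0 <= x -> (0 <= Int_part x)%Z.
Proof.
  intro H. unfold Int_part. destruct (archimed x) as [H1 _].
  assert (0 < IZR (up x)) by lra. apply lt_IZR in H0. lia.
Qed.

Lemma powerRZ2_pos z : 0 < powerRZ 2 z.
Proof. apply powerRZ_lt. lra. Qed.

Lemma Al_nonneg lo sig G i : (0 <= Al lo sig G i)%Z.
Proof.
  unfold Al. destruct (Nat.eqb _ _); [lia|].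
  assert (0 <= Wl lo sig i * powerRZ 2 G).
  { unfold Wl. apply Rmult_le_pos; [apply Rmult_le_pos|]; try apply pos_INR;
    left; apply powerRZ2_pos. }
  apply Int_part_nonneg in H. lia.
Qed.

Definition g (o : scan_out) : nat := match o with SRet _ => 0%nat | _ => 1%nat end.

Fixpoint cnt lo sig G (l : list nat) (n : nat) : nat :=
  match n with
  | O => 0%nat
  | S n' => (cnt lo sig G l n' + g (scan lo sig G (Z.of_nat n' + 1) l))%nat
  end.

Definition SZ lo sig G (l : list nat) : Z := fold_right Z.add 0%Z (map (Al lo sig G) l).

Lemma cnt_nil lo sig G n : cnt lo sig G [] n = n.
Proof. induction n; simpl; auto. rewrite IHn. lia. Qed.

Lemma cnt_cons0 lo sig G i l n : Al lo sig G i = 0%Z ->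
  cnt lo sig G (i :: l) n = cnt lo sig G l n.
Proof.
  intro Ha. induction n; simpl; auto. rewrite IHn. f_equal. f_equal.
  rewrite Ha. destruct (Z.ltb_spec (Z.of_nat n + 1) 0); [lia|].
  destruct (Z.eqb_spec (Z.of_nat n + 1) 0); [lia|]. f_equal. lia.
Qed.

Lemma cnt_cons1 lo sig G i l n : (1 <= Al lo sig G i)%Z ->
  cnt lo sig G (i :: l) n =
  (if (Z.of_nat n <? Al lo sig G i)%Z then 0
   else 1 + cnt lo sig G l (Z.to_nat (Z.of_nat n - Al lo sig G i)))%nat.
Proof.
  intro Ha. set (a := Al lo sig G i) in *. induction n; cbn [cnt].
  - destruct (Z.ltb_spec (Z.of_nat 0) a); [reflexivity|lia].
  - rewrite IHn. cbn [scan]. fold a. rewrite Nat2Z.inj_succ.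
    destruct (Z.ltb_spec (Z.of_nat n) a) as [H1|H1];
    destruct (Z.ltb_spec (Z.succ (Z.of_nat n)) a) as [H2|H2];
    destruct (Z.ltb_spec (Z.of_nat n + 1) a) as [H3|H3]; try lia.
    + simpl. reflexivity.
    + destruct (Z.eqb_spec (Z.of_nat n + 1) a); [|lia].
      replace (Z.to_nat (Z.succ (Z.of_nat n) - a)) with 0%nat by lia. reflexivity.
    + destruct (Z.eqb_spec (Z.of_nat n + 1) a); [lia|].
      replace (Z.to_nat (Z.succ (Z.of_nat n) - a)) with (S (Z.to_nat (Z.of_nat n - a))) by lia.
      cbn [cnt]. replace (Z.of_nat n + 1 - a)%Z with (Z.of_nat (Z.to_nat (Z.of_nat n - a)) + 1)%Z by lia.
      lia.
Qed.

Lemma cnt_bound lo sig G l : forall n,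
  (Z.of_nat (cnt lo sig G l n) <= Z.of_nat (length l) + Z.max 0 (Z.of_nat n - SZ lo sig G l))%Z.
Proof.
  induction l as [|i l IH]; intro n.
  - rewrite cnt_nil. unfold SZ. simpl. lia.
  - assert (Hn := Al_nonneg lo sig G i). unfold SZ; cbn [length map fold_right]; fold (SZ lo sig G l). rewrite Nat2Z.inj_succ.
    destruct (Z.eq_dec (Al lo sig G i) 0) as [E|E].
    + rewrite cnt_cons0 by auto. specialize (IH n). lia.
    + rewrite cnt_cons1 by lia.
      destruct (Z.ltb_spec (Z.of_nat n) (Al lo sig G i)); [lia|].
      specialize (IH (Z.to_nat (Z.of_nat n - Al lo sig G i))). lia.
Qed.

Lemma rsum_app l1 l2 : rsum (l1 ++ l2) = rsum l1 + rsum l2.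
Proof. induction l1; simpl; [lra|]. rewrite IHl1. lra. Qed.

Definition D (n : nat) : list Z := map (fun k => Z.of_nat k + 1)%Z (seq 0 n).

Lemma rsum_D_S (h : Z -> R) n :
  rsum (map h (D (S n))) = rsum (map h (D n)) + h (Z.of_nat n + 1)%Z.
Proof.
  unfold D. rewrite seq_S, !map_app, rsum_app. simpl. lra.
Qed.

Lemma rsum_cnt lo sig G l n :
  rsum (map (fun x => INR (g (scan lo sig G x l))) (D n)) = INR (cnt lo sig G l n).
Proof.
  induction n; [reflexivity|]. rewrite rsum_D_S, IHn. simpl cnt. rewrite plus_INR. reflexivity.
Qed.

Lemma rsum_le (f1 f2 : Z -> R) (l : list Z) :
  (forall x, f1 x <= f2 x) -> rsum (map f1 l) <= rsum (map f2 l).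
Proof. intro H. induction l; simpl; [lra|]. specialize (H a). lra. Qed.

Lemma rsum_1minus (k : Z -> R) l :
  rsum (map (fun x => 1 - k x) l) = INR (length l) - rsum (map k l).
Proof. induction l; simpl; [lra|]. rewrite IHl. destruct (length l); simpl; lra. Qed.

Lemma rsum_const1 l : rsum (map (fun _ : Z => 1) l) = INR (length l).
Proof. induction l; simpl; [lra|]. rewrite IHl. destruct (length l); simpl; lra. Qed.

Lemma rsum_const0 l : rsum (map (fun _ : Z => 0) l) = 0.
Proof. induction l; simpl; [lra|]. rewrite IHl. lra. Qed.

Lemma D_length n : length (D n) = n.
Proof. unfold D. rewrite length_map, length_seq. reflexivity. Qed.

Lemma sumZ_app (l1 l2 : list Z) :
  fold_right Z.add 0%Z (l1 ++ l2) = (fold_right Z.add 0%Z l1 + fold_right Z.add 0%Z l2)%Z.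
Proof. induction l1; simpl; [lia|]. rewrite IHl1. lia. Qed.

Lemma sumZ_rev (l : list Z) : fold_right Z.add 0%Z (rev l) = fold_right Z.add 0%Z l.
Proof. induction l; simpl; [lia|]. rewrite sumZ_app, IHl. simpl. lia. Qed.

Lemma SZ_desc lo N sig G : SZ lo sig G (levels_desc N) = Atot lo N sig G.
Proof. unfold SZ, levels_desc, Atot. rewrite map_rev, sumZ_rev. reflexivity. Qed.

Lemma part b lo N sig G (M : nat) :
  (N < 2 ^ M)%nat -> (2 ^ Z.of_nat M <= Atot lo N sig G)%Z ->
  ex_series (refine_entries_term b lo N sig G) /\
  expected_refine_entries b lo N sig G <= INR N / (2 ^ M - INR N).
Proof.
  intros HN HA.
  set (A := Atot lo N sig G) in *.
  set (n := Z.to_nat A).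
  assert (HAn : IZR A = INR n).
  { unfold n. rewrite INR_IZR_INZ, Z2Nat.id; [reflexivity|].
    assert (0 < 2 ^ Z.of_nat M)%Z by (apply Z.pow_pos_nonneg; lia). lia. }
  assert (HT : 2 ^ M <= INR n).
  { rewrite <- HAn, <- pow2_IZR. apply IZR_le. exact HA. }
  assert (HNT : INR N < 2 ^ M).
  { replace (2 ^ M) with (INR (2 ^ M)). apply lt_INR; exact HN.
    rewrite pow_INR. simpl INR. try (f_equal; lra). }
  set (c := cnt lo sig G (levels_desc N) n).
  assert (Hc : (c <= N)%nat).
  { assert (H := cnt_bound lo sig G (levels_desc N) n). fold c in H.
    rewrite SZ_desc in H. fold A in H.
    unfold levels_desc in H. rewrite length_rev, length_seq in H.
    assert (0 < 2 ^ Z.of_nat M)%Z by (apply Z.pow_pos_nonneg; lia). lia. }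
  apply le_INR in Hc.
  assert (Hdr : draws A = D n) by reflexivity.
  set (hE := fun x => match scan_x lo N sig G x with SRefine _ => 1 | _ => 0 end).
  set (hR := fun x => match scan_x lo N sig G x with
                      | SRet _ => 1
                      | SRefine i => refine_prob b lo sig G i
                      | SFall => 0 end).
  set (E := rsum (map hE (D n))).
  set (Rt := rsum (map hR (D n))).
  assert (HE1 : 0 <= E).
  { unfold E. rewrite <- (rsum_const0 (D n)). apply rsum_le. intro x. unfold hE.
    destruct (scan_x _ _ _ _ _); lra. }
  assert (HE2 : E <= INR c).
  { unfold E, c. rewrite <- rsum_cnt. apply rsum_le. intro x. unfold hE, scan_x.
    destruct (scan _ _ _ _ _); simpl; lra. }
  assert (HR1 : INR n - INR c <= Rt).
  { unfold Rt, c. rewrite <- rsum_cnt, <- (D_length n) at 1. rewrite <- rsum_1minus.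
    apply rsum_le. intro x. unfold hR, scan_x.
    destruct (scan _ _ _ _ _); simpl; try lra.
    destruct (refine_prob_bounds b lo sig G i). lra. }
  assert (HR2 : Rt <= INR n).
  { unfold Rt. rewrite <- (D_length n) at 2. rewrite <- rsum_const1.
    apply rsum_le. intro x. unfold hR.
    destruct (scan_x _ _ _ _ _); try lra.
    destruct (refine_prob_bounds b lo sig G i). lra. }
  assert (Hpe : P_enter lo N sig G = E / INR n).
  { unfold P_enter. fold A. rewrite HAn, Hdr. reflexivity. }
  assert (Hpr : P_ret b lo N sig G = Rt / INR n).
  { unfold P_ret. fold A. rewrite HAn, Hdr. reflexivity. }
  assert (Hn0 : 0 < INR n) by (assert (H := pow2_pos M); lra).
  set (p := Rt / INR n) in *.
  set (e := E / INR n) in *.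
  assert (Hp0 : 0 < p).
  { unfold p. apply Rdiv_lt_0_compat; lra. }
  assert (Hp1 : p <= 1).
  { unfold p. apply Rmult_le_reg_r with (INR n); [lra|].
    unfold Rdiv. rewrite Rmult_assoc, Rinv_l; lra. }
  assert (Hser : is_series (refine_entries_term b lo N sig G) (/ p * e)).
  { unfold refine_entries_term. rewrite Hpe, Hpr. fold p e.
    assert (Hg : Rabs (1 - p) < 1) by (rewrite Rabs_pos_eq; lra).
    apply is_series_geom in Hg. replace (1 - (1 - p)) with p in Hg by ring.
    apply (is_series_scal_r e) in Hg. exact Hg. }
  split; [eexists; exact Hser|].
  unfold expected_refine_entries. rewrite (is_series_unique _ _ Hser).
  assert (He : e * INR n = E) by (unfold e; field; lra).
  assert (Hp : p * INR n = Rt) by (unfold p; field; lra).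
  assert (HNpos : 0 <= INR N) by apply pos_INR.
  assert (Hc0 : 0 <= INR c) by apply pos_INR.
  apply Rmult_le_reg_r with (p * (2 ^ M - INR N)).
  { apply Rmult_lt_0_compat; lra. }
  replace (/ p * e * (p * (2 ^ M - INR N))) with (e * (2 ^ M - INR N)) by (field; lra).
  replace (INR N / (2 ^ M - INR N) * (p * (2 ^ M - INR N))) with (INR N * p) by (field; lra).
  apply Rmult_le_reg_r with (INR n); [lra|].
  replace (e * (2 ^ M - INR N) * INR n) with (E * (2 ^ M - INR N)) by (rewrite <- He; ring).
  replace (INR N * p * INR n) with (INR N * Rt) by (rewrite <- Hp; ring).
  assert (H1 : E * (2 ^ M - INR N) <= INR c * (2 ^ M - INR N)) by (apply Rmult_le_compat_r; lra).
  assert (H2 : INR N * (INR n - INR c) <= INR N * Rt) by (apply Rmult_le_compat_l; lra).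
  nra.
Qed.

Theorem mainTheorem7 (b : nat) (lo : Z) (N : nat) (sig : nat -> list nat) (G : Z)
    (K L : nat) :
  (2 <= b)%nat ->
  (forall i s, (i < N)%nat -> In s (sig i) -> (2 ^ (b - 1) <= s < 2 ^ b)%nat) ->
  (zcount N sig < 2 ^ b)%nat ->
  (1 <= zcount N sig)%nat ->
  (1 <= K)%nat -> (K <= L)%nat -> (N < 2 ^ K)%nat ->
  ((2 ^ Z.of_nat K <= Atot lo N sig G)%Z ->
     ex_series (refine_entries_term b lo N sig G) /\
     expected_refine_entries b lo N sig G <= INR N / (2 ^ K - INR N)) /\
  ((2 ^ Z.of_nat L <= Atot lo N sig G)%Z ->
     ex_series (refine_entries_term b lo N sig G) /\
     expected_refine_entries b lo N sig G <= INR N / (2 ^ L - INR N)).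
Proof.
  intros _ _ _ _ _ HKL HN. split; intro H; apply part; auto.
  apply Nat.lt_le_trans with (2 ^ K)%nat; auto. apply Nat.pow_le_mono_r; lia.
Qed.
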